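(* Let $\mathcal{C}$ be a class of groups, and suppose that either (a) $\mathcal{C}$ is closed under free products, or (b) $\mathcal{C}$ is closed under finite direct products and every free product of residually $\mathcal{C}$ groups is residually $\mathcal{C}$. Then the class of LE-$\mathcal{C}$ groups is closed under free products: the free product of any family of LE-$\mathcal{C}$ groups is LE-$\mathcal{C}$.
   Context: A class of groups is a family of groups closed under isomorphism. A group $G$ is residually $\mathcal{C}$ if for every $g\in G\setminus\{e\}$ there exist $C\in\mathcal{C}$ and a surjective homomorphism $\varphi\colon G\to C$ with $\varphi(g)\neq e$. For groups $G,C$ and a finite subset $K\subseteq G$, a map $\varphi\colon G\to C$ is a $K$-almost-homomorphism if $\varphi(k_1k_2)=\varphi(k_1)\varphi(k_2)$ for all $k_1,k_2\in K$ and $\varphi$ restricted to $K$ is injective. A group $G$ is locally embeddable into $\mathcal{C}$ (LE-$\mathcal{C}$) if for every finite subset $K\subseteq G$ there exist $C\in\mathcal{C}$ and a $K$-almost-homomorphism $G\to C$. *)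

(* Defs.v *)
From Stdlib Require Import List.

Record group := Group {
  carrier :> Type;
  gmul : carrier -> carrier -> carrier;
  gone : carrier;
  ginv : carrier -> carrier;
  gmulA : forall x y z, gmul x (gmul y z) = gmul (gmul x y) z;
  gmul1l : forall x, gmul gone x = x;
  gmul1r : forall x, gmul x gone = x;
  gmulVl : forall x, gmul (ginv x) x = gone;
  gmulVr : forall x, gmul x (ginv x) = gone
}.

Arguments gmul {g} _ _.
Arguments gone {g}.
Arguments ginv {g} _.

Record hom (G H : group) := Hom {
  hfun :> G -> H;
  hfun_mul : forall x y : G, hfun (gmul x y) = gmul (hfun x) (hfun y)
}.
Arguments hfun {G H} _ _.

Definition surjective_hom {G H : group} (f : hom G H) : Prop :=
  forall y : H, exists x : G, f x = y.

Definition isomorphic (G H : group) : Prop :=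
  exists f : hom G H, (forall x y, f x = f y -> x = y) /\ surjective_hom f.

Definition class_of_groups (C : group -> Prop) : Prop :=
  forall G H, isomorphic G H -> C G -> C H.

Definition is_free_product {I : Type} (G : I -> group) (P : group)
  (iota : forall i, hom (G i) P) : Prop :=
  forall (H : group) (f : forall i, hom (G i) H),
    exists phi : hom P H,
      (forall i (x : G i), phi (iota i x) = f i x) /\
      (forall psi : hom P H,
         (forall i (x : G i), psi (iota i x) = f i x) -> forall y, psi y = phi y).

Definition is_direct_product {I : Type} (G : I -> group) (P : group)
  (pi : forall i, hom P (G i)) : Prop :=
  forall (H : group) (f : forall i, hom H (G i)),
    exists phi : hom H P,
      (forall i (x : H), pi i (phi x) = f i x) /\
      (forall psi : hom H P,
         (forall i (x : H), pi i (psi x) = f i x) -> forall y, psi y = phi y).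

Definition finite_type (I : Type) : Prop := exists l : list I, forall i, In i l.

Definition closed_under_free_products (C : group -> Prop) : Prop :=
  forall (I : Type) (G : I -> group) (P : group) (iota : forall i, hom (G i) P),
    is_free_product G P iota -> (forall i, C (G i)) -> C P.

(** Finite direct products (the empty product, i.e. the trivial group, included). *)
Definition closed_under_finite_direct_products (C : group -> Prop) : Prop :=
  forall (I : Type) (G : I -> group) (P : group) (pi : forall i, hom P (G i)),
    finite_type I -> is_direct_product G P pi -> (forall i, C (G i)) -> C P.

Definition residually (C : group -> Prop) (G : group) : Prop :=
  forall g : G, g <> gone ->
    exists (K : group) (phi : hom G K), C K /\ surjective_hom phi /\ phi g <> gone.

Definition free_products_of_residually_preserve (C : group -> Prop) : Prop :=
  forall (I : Type) (G : I -> group) (P : group) (iota : forall i, hom (G i) P),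
    is_free_product G P iota -> (forall i, residually C (G i)) -> residually C P.

Definition almost_hom {G H : group} (K : list G) (phi : G -> H) : Prop :=
  (forall k1 k2, In k1 K -> In k2 K -> phi (gmul k1 k2) = gmul (phi k1) (phi k2)) /\
  (forall k1 k2, In k1 K -> In k2 K -> phi k1 = phi k2 -> k1 = k2).

Definition LE (C : group -> Prop) (G : group) : Prop :=
  forall K : list G, exists (H : group) (phi : G -> H), C H /\ almost_hom K phi.

(* Main.v *)
Require Import Defs.
From Stdlib Require Import List ClassicalEpsilon ProofIrrelevance.
Import ListNotations.

Lemma xm (P : Prop) : {P} + {~ P}.
Proof. apply excluded_middle_informative. Qed.

Lemma xm_refl (X : Type) (i : X) : xm (i = i) = left eq_refl.
Proof.
  destruct (xm (i = i)) as [e|n].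
  - rewrite (proof_irrelevance _ e eq_refl). reflexivity.
  - exfalso; apply n; reflexivity.
Qed.

Section GL.
Variable G : group.
Lemma idem_one (x : G) : gmul x x = x -> x = gone.
Proof.
  intro H.
  assert (H0 : gmul (ginv x) (gmul x x) = gmul (ginv x) x) by (rewrite H; reflexivity).
  rewrite gmulA, gmulVl, gmul1l in H0. exact H0.
Qed.
Lemma ginv_inv (x : G) : ginv (ginv x) = x.
Proof.
  rewrite <- (gmul1r _ (ginv (ginv x))), <- (gmulVl _ x), gmulA, gmulVl, gmul1l.
  reflexivity.
Qed.
End GL.

Lemma hom_one (G H : group) (f : hom G H) : f gone = gone.
Proof. apply idem_one. rewrite <- hfun_mul, gmul1l. reflexivity. Qed.

Section FP.
Variable Ix : Type.
Variable A : Ix -> group.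
Definition Lt := {i : Ix & A i}.

Definition act (l : Lt) (r : list Lt) : list Lt :=
  match l with existT _ i g =>
  match r with
  | nil => if xm (g = gone) then nil else [existT A i g]
  | existT _ j x :: r' =>
     match xm (j = i) with
     | left e => if xm (gmul g (eq_rect j A x i e) = gone) then r'
                 else existT A i (gmul g (eq_rect j A x i e)) :: r'
     | right _ => if xm (g = gone) then r else existT A i g :: r
     end
  end end.

Lemma act_nil i g : act (existT A i g) nil = if xm (g = gone) then nil else [existT A i g].
Proof. reflexivity. Qed.
Lemma act_cc i g j x r : act (existT A i g) (existT A j x :: r) =
     match xm (j = i) with
     | left e => if xm (gmul g (eq_rect j A x i e) = gone) then r
                 else existT A i (gmul g (eq_rect j A x i e)) :: r
     | right _ => if xm (g = gone) then existT A j x :: r else existT A i g :: existT A j x :: r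
     end.
Proof. reflexivity. Qed.

Definition hne (i : Ix) (w : list Lt) : Prop :=
  match w with nil => True | l :: _ => projT1 l <> i end.
Fixpoint reduced (w : list Lt) : Prop :=
  match w with nil => True
  | l :: w' => projT2 l <> gone /\ hne (projT1 l) w' /\ reduced w' end.

Lemma act_red l r : reduced r -> reduced (act l r).
Proof.
  destruct l as [i g]. destruct r as [|[j x] r']; simpl.
  - intros _. destruct (xm (g = gone)); simpl; auto.
  - intros (Hx & Hh & Hr). destruct (xm (j = i)) as [e|n].
    + subst. simpl. destruct (xm _) as [E|E]. exact Hr. simpl. auto.
    + destruct (xm (g = gone)); simpl; auto.
Qed.

Lemma act_one i r : reduced r -> act (existT A i gone) r = r.
Proof.
  destruct r as [|[j x] r']; simpl.
  - intros _. destruct (xm (gone = gone)) as [_|n]; [reflexivity|]. exfalso; auto.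
  - intros (Hx & Hh & Hr). destruct (xm (j = i)) as [e|n].
    + subst. simpl. rewrite gmul1l. destruct (xm (x = gone)); [contradiction|reflexivity].
    + destruct (xm (gone = gone)) as [_|n']; [reflexivity|]. exfalso; auto.
Qed.

Lemma act_comp i g h r : reduced r ->
  act (existT A i g) (act (existT A i h) r) = act (existT A i (gmul g h)) r.
Proof.
  destruct r as [|[j x] r'].
  - intros _. simpl. destruct (xm (h = gone)) as [Eh|Eh].
    + subst h. rewrite gmul1r. reflexivity.
    + simpl. rewrite xm_refl. simpl. reflexivity.
  - intros (Hx & Hh & Hr). simpl in Hx, Hh. destruct (xm (j = i)) as [e|n].
    + subst j. simpl. rewrite xm_refl. simpl.
      destruct (xm (gmul h x = gone)) as [E|E].
      * rewrite <- gmulA, E, gmul1r.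
        destruct r' as [|[k y] r'']; simpl.
        -- reflexivity.
        -- simpl in Hh. destruct (xm (k = i)) as [e|n]; [contradiction|reflexivity].
      * simpl. rewrite xm_refl. simpl. rewrite gmulA. reflexivity.
    + simpl. destruct (xm (j = i)) as [e|_]; [contradiction|].
      destruct (xm (h = gone)) as [Eh|Eh].
      * subst h. rewrite gmul1r. simpl. destruct (xm (j = i)) as [e|_]; [contradiction|].
        reflexivity.
      * simpl. rewrite xm_refl. simpl. reflexivity.
Qed.

Fixpoint M (w s : list Lt) : list Lt :=
  match w with nil => s | l :: w' => act l (M w' s) end.

Lemma M_red w s : reduced s -> reduced (M w s).
Proof. induction w; simpl; auto using act_red. Qed.

Lemma key l t s : reduced t -> reduced s -> M (act l t) s = act l (M t s).
Proof.
  destruct l as [i g]. destruct t as [|[j x] t']; intros Ht Hs.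
  - rewrite act_nil. destruct (xm (g = gone)) as [E|E].
    + subst. cbn [M]. symmetry. apply act_one; auto.
    + reflexivity.
  - destruct Ht as (Hx & Hh & Ht). simpl in Hx, Hh. rewrite act_cc.
    destruct (xm (j = i)) as [e|n].
    + subst j. cbn [eq_rect M]. rewrite act_comp by (apply M_red; auto).
      destruct (xm (gmul g x = gone)) as [E|E].
      * rewrite E, act_one by (apply M_red; auto). reflexivity.
      * reflexivity.
    + destruct (xm (g = gone)) as [E|E].
      * subst. cbn [M]. symmetry. apply act_one. apply act_red, M_red; auto.
      * reflexivity.
Qed.

Lemma M_app w1 w2 s : M (w1 ++ w2) s = M w1 (M w2 s).
Proof. induction w1; simpl; congruence. Qed.

Lemma M_redM w s : reduced s -> M (M w nil) s = M w s.
Proof.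
  intro Hs. induction w as [|l w IH]; simpl; auto.
  rewrite key; [rewrite IH; auto | apply M_red; simpl; auto | auto].
Qed.

Lemma act_cons l r : reduced (l :: r) -> act l r = l :: r.
Proof.
  destruct l as [i g]; destruct r as [|[j x] r']; simpl; intros (Hg & Hh & Hr).
  - destruct (xm (g = gone)); [contradiction|reflexivity].
  - destruct (xm (j = i)) as [e|_]; [contradiction|].
    destruct (xm (g = gone)); [contradiction|reflexivity].
Qed.

Lemma M_nil_id r : reduced r -> M r nil = r.
Proof.
  induction r as [|l r IH]; simpl; intros H; [reflexivity|].
  destruct H as (H1 & H2 & H3). rewrite IH by auto. apply act_cons. simpl; auto.
Qed.

Definition linv (l : Lt) : Lt := match l with existT _ i g => existT A i (ginv g) end.
Definition winv (w : list Lt) := rev (map linv w).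

Lemma M_inv w s : reduced s -> M (winv w) (M w s) = s.
Proof.
  intro Hs. induction w as [|[i g] w IH]; [reflexivity|].
  unfold winv in *. cbn [map rev]. rewrite M_app. cbn [M linv].
  rewrite act_comp by (apply M_red; auto). rewrite gmulVl, act_one by (apply M_red; auto).
  exact IH.
Qed.

Lemma winv_inv w : winv (winv w) = w.
Proof.
  unfold winv. rewrite map_rev, rev_involutive, map_map.
  induction w as [|[i g] w IH]; simpl; [reflexivity|]. rewrite ginv_inv, IH. reflexivity.
Qed.

Lemma M_inv' w s : reduced s -> M w (M (winv w) s) = s.
Proof. intro Hs. pose proof (M_inv (winv w) s Hs) as H. rewrite winv_inv in H. exact H. Qed.

Definition RW := {w : list Lt | reduced w}.
Lemma RW_eq (a b : RW) : proj1_sig a = proj1_sig b -> a = b.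
Proof. destruct a, b; simpl; intros ->; f_equal; apply proof_irrelevance. Qed.

Definition FPmul (a b : RW) : RW :=
  exist _ (M (proj1_sig a) (proj1_sig b)) (M_red _ _ (proj2_sig b)).
Definition FPone : RW := exist _ nil I.
Definition FPinv (a : RW) : RW := exist _ (M (winv (proj1_sig a)) nil) (M_red _ nil I).

Lemma FPassoc x y z : FPmul x (FPmul y z) = FPmul (FPmul x y) z.
Proof.
  apply RW_eq. destruct x as [x Hx], y as [y Hy], z as [z Hz]; simpl.
  assert (E : M x y = M (x ++ y) nil) by (rewrite M_app, M_nil_id; auto).
  rewrite E, M_redM, M_app by auto. reflexivity.
Qed.
Lemma FP1l x : FPmul FPone x = x.
Proof. apply RW_eq. reflexivity. Qed.
Lemma FP1r x : FPmul x FPone = x.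
Proof. apply RW_eq. destruct x as [x Hx]; simpl. apply M_nil_id; auto. Qed.
Lemma FPVl x : FPmul (FPinv x) x = FPone.
Proof.
  apply RW_eq. destruct x as [x Hx]; simpl. rewrite M_redM by auto.
  pose proof (M_inv x nil I) as H. rewrite M_nil_id in H by auto. exact H.
Qed.
Lemma FPVr x : FPmul x (FPinv x) = FPone.
Proof. apply RW_eq. destruct x as [x Hx]; simpl. apply M_inv'. exact I. Qed.

Definition FPgroup : group := Group RW FPmul FPone FPinv FPassoc FP1l FP1r FPVl FPVr.

Definition iotaf (i : Ix) (x : A i) : FPgroup :=
  exist _ (act (existT A i x) nil) (act_red _ nil I).
Lemma iotaf_mul i (x y : A i) : iotaf i (gmul x y) = gmul (iotaf i x) (iotaf i y).
Proof.
  apply RW_eq. cbn [proj1_sig gmul FPgroup FPmul iotaf].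
  rewrite key by (first [exact I | apply act_red; exact I]).
  cbn [M]. rewrite act_comp by exact I. reflexivity.
Qed.
Definition FPiota (i : Ix) : hom (A i) FPgroup := Hom _ _ (iotaf i) (iotaf_mul i).

Section Univ.
Variable H : group.
Variable h : forall i, hom (A i) H.
Definition hl (l : Lt) : H := match l with existT _ i x => h i x end.
Fixpoint ev (w : list Lt) : H :=
  match w with nil => gone | l :: w' => gmul (hl l) (ev w') end.

Lemma ev_act l r : reduced r -> ev (act l r) = gmul (hl l) (ev r).
Proof.
  destruct l as [i g]; destruct r as [|[j x] r']; intros Hr; simpl.
  - destruct (xm (g = gone)) as [E|E].
    + subst. simpl. rewrite hom_one, gmul1l. reflexivity.
    + reflexivity.
  - destruct (xm (j = i)) as [e|n].
    + subst. simpl. destruct (xm (gmul g x = gone)) as [E|E].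
      * rewrite gmulA, <- hfun_mul, E, hom_one, gmul1l. reflexivity.
      * simpl. rewrite hfun_mul, gmulA. reflexivity.
    + destruct (xm (g = gone)) as [E|E].
      * subst. rewrite hom_one, gmul1l. reflexivity.
      * reflexivity.
Qed.

Lemma ev_M w s : reduced s -> ev (M w s) = gmul (ev w) (ev s).
Proof.
  intro Hs. induction w as [|l w IH]; simpl.
  - rewrite gmul1l. reflexivity.
  - rewrite ev_act by (apply M_red; auto). rewrite IH, gmulA. reflexivity.
Qed.

Definition FPphi_f (a : FPgroup) : H := ev (proj1_sig a).
Lemma FPphi_mul (a b : FPgroup) : FPphi_f (gmul a b) = gmul (FPphi_f a) (FPphi_f b).
Proof. destruct a as [a Ha], b as [b Hb]. unfold FPphi_f. simpl. apply ev_M; auto. Qed.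
End Univ.

Lemma FP_free : is_free_product A FPgroup FPiota.
Proof.
  intros H h. exists (Hom _ _ (FPphi_f H h) (FPphi_mul H h)). split.
  - intros i x. cbn [hfun FPiota]. unfold FPphi_f, iotaf. cbn [proj1_sig]. rewrite ev_act by exact I.
    cbn [ev hl]. apply gmul1r.
  - intros psi Hpsi [r Hr]. cbn [hfun]. unfold FPphi_f. cbn [proj1_sig].
    revert Hr. induction r as [|l r IH]; intro Hr.
    + simpl. rewrite <- (hom_one _ _ psi). f_equal. apply RW_eq. reflexivity.
    + pose proof Hr as Hr'. destruct Hr' as (H1 & H2 & H3).
      destruct l as [i x].
      assert (E : exist reduced (existT A i x :: r) Hr
                  = gmul (FPiota i x) (exist reduced r H3 : FPgroup)).
      { apply RW_eq. cbn [proj1_sig gmul FPgroup FPmul FPiota hfun iotaf].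
        rewrite key by (first [exact I | exact H3]). cbn [M].
        symmetry. apply act_cons. exact Hr. }
      transitivity (hfun psi (gmul (FPiota i x) (exist reduced r H3 : FPgroup))).
      { apply (f_equal (hfun psi) E). }
      rewrite hfun_mul, Hpsi, IH. reflexivity.
Qed.

End FP.

Arguments act {Ix A} _ _.
Arguments reduced {Ix A} _.
Arguments M {Ix A} _ _.
Arguments RW_eq {Ix A} _ _ _.

Section Maps.
Variable Ix : Type.
Variables A B : Ix -> group.

Definition reqhead (l : Lt Ix A) (r : list (Lt Ix A)) : list (Lt Ix A) :=
  match l with existT _ i g =>
  match r with nil => nil
  | existT _ j x :: _ =>
    match xm (j = i) with
    | left e => [existT A i (eq_rect j A x i e); existT A i (gmul g (eq_rect j A x i e))]
    | right _ => nil end end end.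

Fixpoint Req (w : list (Lt Ix A)) : list (Lt Ix A) :=
  match w with nil => nil | l :: w' => l :: reqhead l (M w' nil) ++ Req w' end.

Lemma In_Req l w : In l w -> In l (Req w).
Proof.
  induction w as [|l' w IH]; simpl; [auto|]. intros [E|H]; [left; auto|].
  right. apply in_or_app. right. auto.
Qed.

Variable f : forall i, A i -> B i.
Definition fl (l : Lt Ix A) : Lt Ix B := match l with existT _ i x => existT B i (f i x) end.

Variable Lset : forall i, list (A i).
Hypothesis Hone : forall i, In gone (Lset i).
Hypothesis Hah : forall i, almost_hom (Lset i) (f i).
Definition inL (l : Lt Ix A) : Prop := In (projT2 l) (Lset (projT1 l)).

Lemma f_one i : f i gone = gone.
Proof.
  apply idem_one. rewrite <- (proj1 (Hah i)) by apply Hone.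
  rewrite gmul1l. reflexivity.
Qed.

Lemma f_one_iff i x : In x (Lset i) -> (f i x = gone <-> x = gone).
Proof.
  intro Hx. split.
  - intro E. apply (proj2 (Hah i)); auto. rewrite E, f_one. reflexivity.
  - intros ->. apply f_one.
Qed.

Lemma act_map l r : inL l -> (forall l', In l' (reqhead l r) -> inL l') ->
  act (fl l) (map fl r) = map fl (act l r).
Proof.
  destruct l as [i g]; destruct r as [|[j x] r']; intros Hl Hreq; unfold inL in Hl; simpl in Hl.
  - cbn [map fl]. rewrite !act_nil.
    destruct (xm (f i g = gone)) as [E|E]; destruct (xm (g = gone)) as [E'|E'];
      try reflexivity; exfalso.
    + apply E'. apply (f_one_iff i g Hl); auto.
    + apply E. apply (f_one_iff i g Hl); auto.
  - cbn [map fl]. rewrite !act_cc. cbn [reqhead] in Hreq.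
    destruct (xm (j = i)) as [e|n].
    + subst j. cbn [eq_rect] in *.
      assert (Hx : In x (Lset i)) by (apply (Hreq (existT A i x)); left; auto).
      assert (Hgx : In (gmul g x) (Lset i))
        by (apply (Hreq (existT A i (gmul g x))); right; left; auto).
      rewrite <- (proj1 (Hah i)) by auto.
      destruct (xm (f i (gmul g x) = gone)) as [E|E];
        destruct (xm (gmul g x = gone)) as [E'|E']; try reflexivity; exfalso.
      * apply E'. apply (f_one_iff i _ Hgx); auto.
      * apply E. apply (f_one_iff i _ Hgx); auto.
    + destruct (xm (f i g = gone)) as [E|E]; destruct (xm (g = gone)) as [E'|E'];
        try reflexivity; exfalso.
      * apply E'. apply (f_one_iff i g Hl); auto.
      * apply E. apply (f_one_iff i g Hl); auto.
Qed.

Lemma red_map w : (forall l, In l (Req w) -> inL l) -> M (map fl w) nil = map fl (M w nil).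
Proof.
  induction w as [|l w IH]; intros Hw; [reflexivity|].
  cbn [map M]. rewrite IH.
  - apply act_map.
    + apply Hw. left; auto.
    + intros l' Hl'. apply Hw. right. apply in_or_app. left; auto.
  - intros l' Hl'. apply Hw. right. apply in_or_app. right; auto.
Qed.

Lemma map_fl_inj r1 : forall r2, (forall l, In l r1 -> inL l) -> (forall l, In l r2 -> inL l) ->
  map fl r1 = map fl r2 -> r1 = r2.
Proof.
  induction r1 as [|[i x] r1 IH]; intros [|[j y] r2] H1 H2 E; try discriminate; auto.
  cbn [map fl] in E. injection E as ij E1 E2. subst j.
  apply inj_pair2 in E1.
  assert (x = y).
  { apply (proj2 (Hah i)); auto.
    - apply (H1 (existT A i x)); left; auto.
    - apply (H2 (existT A i y)); left; auto. }
  subst y. f_equal. apply IH; auto.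
  - intros; apply H1; right; auto.
  - intros; apply H2; right; auto.
Qed.

End Maps.

Definition castf (Ix : Type) (A : Ix -> group) (i : Ix) (ls : list (Lt Ix A)) : list (A i) :=
  flat_map (fun l => match l with existT _ j x =>
     match xm (j = i) with left e => [eq_rect j A x i e] | right _ => nil end end) ls.

Lemma in_castf (Ix : Type) (A : Ix -> group) i (x : A i) ls : In (existT A i x) ls -> In x (castf Ix A i ls).
Proof.
  intro H. unfold castf. apply in_flat_map. exists (existT A i x). split; auto.
  rewrite xm_refl. left. reflexivity.
Qed.

Definition unitG : group.
Proof.
  refine (Group unit (fun _ _ => tt) tt (fun _ => tt) _ _ _ _ _);
    intros; repeat match goal with x : unit |- _ => destruct x end; reflexivity.
Defined.

Definition prodG (H K : group) : group.
Proof.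
  refine (Group (H * K)%type
    (fun x y => (gmul (fst x) (fst y), gmul (snd x) (snd y)))
    (gone, gone) (fun x => (ginv (fst x), ginv (snd x))) _ _ _ _ _);
  intros; repeat match goal with x : (_ * _)%type |- _ => destruct x end; simpl;
  f_equal; auto using gmulA, gmul1l, gmul1r, gmulVl, gmulVr.
Defined.

Definition prj (H K : group) (b : bool) : hom (prodG H K) (if b then H else K) :=
  match b as b' return hom (prodG H K) (if b' then H else K) with
  | true => Hom (prodG H K) H fst (fun x y => eq_refl)
  | false => Hom (prodG H K) K snd (fun x y => eq_refl)
  end.

Lemma prod_dp (H K : group) :
  is_direct_product (fun b : bool => if b then H else K) (prodG H K) (prj H K).
Proof.
  intros X f.
  assert (Hm : forall x y : X, ((f true (gmul x y), f false (gmul x y)) : prodG H K) =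
                gmul ((f true x, f false x) : prodG H K) (f true y, f false y)).
  { intros x y. simpl. rewrite !hfun_mul. reflexivity. }
  exists (Hom X (prodG H K) (fun x => (f true x, f false x)) Hm). split.
  - intros [|] x; reflexivity.
  - intros psi Hpsi y. simpl. pose proof (Hpsi true y) as E1. pose proof (Hpsi false y) as E2.
    simpl in E1, E2. rewrite <- E1, <- E2. destruct (hfun psi y); reflexivity.
Qed.

Definition emptyfam : Empty_set -> group := fun e => match e with end.
Definition emptypi : forall e, hom unitG (emptyfam e) := fun e => match e with end.

Lemma empty_dp : is_direct_product emptyfam unitG emptypi.
Proof.
  intros X f. exists (Hom X unitG (fun _ => tt) (fun _ _ => eq_refl)). split.
  - intros [].
  - intros psi _ y. destruct (hfun psi y). reflexivity.
Qed.

Lemma resid_sep (C : group -> Prop) (Q : group) :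
  closed_under_finite_direct_products C -> residually C Q ->
  forall ps : list (Q * Q), exists (H : group) (pi : hom Q H), C H /\
    forall a b, In (a, b) ps -> pi a = pi b -> a = b.
Proof.
  intros Hfd Hres ps. induction ps as [|[a b] ps IH].
  - exists unitG, (Hom Q unitG (fun _ => tt) (fun _ _ => eq_refl)). split.
    + apply (Hfd Empty_set emptyfam unitG emptypi).
      * exists nil. intros [].
      * apply empty_dp.
      * intros [].
    + intros a b [].
  - destruct IH as [H [pi [HCH Hpi]]].
    destruct (xm (a = b)) as [Eab|Nab].
    + exists H, pi. split; auto. intros a' b' [E|Hin] Hp.
      * injection E as -> ->. exact Eab.
      * auto.
    + assert (Hg : gmul a (ginv b) <> gone).
      { intro E. apply Nab. rewrite <- (gmul1r _ a), <- (gmulVl _ b), gmulA, E, gmul1l.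
        reflexivity. }
      destruct (Hres _ Hg) as [K0 [rho [HK [_ Hrho]]]].
      assert (Hm : forall x y : Q, ((pi (gmul x y), rho (gmul x y)) : prodG H K0) =
                gmul ((pi x, rho x) : prodG H K0) (pi y, rho y)).
      { intros x y. simpl. rewrite !hfun_mul. reflexivity. }
      exists (prodG H K0), (Hom Q (prodG H K0) (fun x => (pi x, rho x)) Hm). split.
      * apply (Hfd bool (fun b : bool => if b then H else K0) (prodG H K0) (prj H K0)).
        -- exists [true; false]. intros [|]; simpl; auto.
        -- apply prod_dp.
        -- intros [|]; auto.
      * intros a' b' [E|Hin] Hp; simpl in Hp; injection Hp as Hp1 Hp2.
        -- injection E as -> ->. exfalso. apply Hrho.
           rewrite hfun_mul, Hp2, <- hfun_mul, gmulVr. apply hom_one.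
        -- auto.
Qed.

Lemma choose_LE (C : group -> Prop) (G : group) (L : list G) :
  LE C G -> {H : group & {phi : G -> H | C H /\ almost_hom L phi}}.
Proof.
  intro h. destruct (constructive_indefinite_description _ (h L)) as [H HH].
  exists H. apply constructive_indefinite_description. exact HH.
Defined.

Definition homcomp {A B D : group} (f : hom A B) (g : hom B D) : hom A D.
Proof.
  refine (Hom A D (fun x => g (f x)) _). intros x y. rewrite !hfun_mul. reflexivity.
Defined.
Definition idhom (A : group) : hom A A := Hom A A (fun x => x) (fun x y => eq_refl).

Theorem theorem1p5 (C : group -> Prop) :
  class_of_groups C ->
  (closed_under_free_products C \/
   (closed_under_finite_direct_products C /\ free_products_of_residually_preserve C)) ->
  forall (I : Type) (G : I -> group) (P : group) (iota : forall i, hom (G i) P),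
    is_free_product G P iota -> (forall i, LE C (G i)) -> LE C P.
Proof.
  intros HC Hcase I G P iota HP HLE K.
  destruct (HP (FPgroup I G) (FPiota I G)) as [Th [HTh _]].
  destruct (FP_free I G P iota) as [E [HE _]].
  assert (HET : forall y, E (Th y) = y).
  { destruct (HP P iota) as [phi [_ Hu]]. intro y.
    transitivity (phi y).
    - apply (Hu (homcomp Th E)). intros i x. simpl. rewrite HTh, HE. reflexivity.
    - symmetry. apply (Hu (idhom P)). intros i x. reflexivity. }
  set (rw := fun k => proj1_sig (Th k)).
  assert (Hrw : forall k, reduced (rw k)) by (intro k; exact (proj2_sig (Th k))).
  set (Ws := map (fun p => rw (fst p) ++ rw (snd p)) (list_prod K K) ++ map rw K).
  set (Rl := flat_map (Req I G) Ws).
  set (Lset := fun i => gone :: castf I G i Rl).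
  set (ch := fun i => choose_LE C (G i) (Lset i) (HLE i)).
  set (Cf := fun i => projT1 (ch i)).
  set (ff := fun i => proj1_sig (projT2 (ch i)) : G i -> Cf i).
  assert (HCf : forall i, C (Cf i)) by (intro i; exact (proj1 (proj2_sig (projT2 (ch i))))).
  assert (Hah : forall i, almost_hom (Lset i) (ff i))
    by (intro i; exact (proj2 (proj2_sig (projT2 (ch i))))).
  assert (Hone : forall i, In gone (Lset i)) by (intro i; left; reflexivity).
  assert (HW : forall w, In w Ws -> forall l, In l (Req I G w) -> inL I G Lset l).
  { intros w Hw [j x] Hl. unfold inL. simpl. right. apply in_castf.
    unfold Rl. apply in_flat_map. exists w. auto. }
  assert (HW1 : forall k, In k K -> In (rw k) Ws).
  { intros k Hk. unfold Ws. apply in_or_app. right. apply in_map. auto. }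
  assert (HW2 : forall k1 k2, In k1 K -> In k2 K -> In (rw k1 ++ rw k2) Ws).
  { intros k1 k2 H1 H2. unfold Ws. apply in_or_app. left.
    apply (in_map (fun p => rw (fst p) ++ rw (snd p)) _ (k1, k2)). apply in_prod; auto. }
  set (Q := FPgroup I Cf).
  set (phi0 := fun y => exist reduced (M (map (fl I G Cf ff) (rw y)) nil)
                          (M_red _ _ _ nil Logic.I) : Q).
  assert (Hphi0 : almost_hom K phi0).
  { split.
    - intros k1 k2 H1 H2. apply RW_eq.
      unfold phi0. cbn [proj1_sig gmul Q FPgroup FPmul].
      assert (Er : rw (gmul k1 k2) = M (rw k1 ++ rw k2) nil).
      { unfold rw. rewrite hfun_mul. cbn [proj1_sig gmul FPgroup FPmul].
        rewrite M_app, (M_nil_id _ _ _ (proj2_sig (Th k2))). reflexivity. }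
      rewrite Er, <- (red_map I G Cf ff Lset Hone Hah) by (apply HW; auto).
      rewrite M_nil_id by (apply M_red; exact Logic.I).
      rewrite M_redM by (apply M_red; exact Logic.I).
      rewrite <- M_app, map_app. reflexivity.
    - intros k1 k2 H1 H2 Hp. unfold phi0 in Hp.
      apply (f_equal (@proj1_sig _ _)) in Hp. cbn [proj1_sig] in Hp.
      rewrite !(red_map I G Cf ff Lset Hone Hah) in Hp by (apply HW; auto).
      rewrite !M_nil_id in Hp by auto.
      apply (map_fl_inj I G Cf ff Lset Hah) in Hp.
      + rewrite <- (HET k1), <- (HET k2). f_equal. apply RW_eq. exact Hp.
      + intros l Hl. apply (HW (rw k1)); auto. apply In_Req. auto.
      + intros l Hl. apply (HW (rw k2)); auto. apply In_Req. auto. }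
  destruct Hcase as [Ha | [Hfd Hres]].
  - exists Q, phi0. split; auto.
    apply (Ha I Cf Q (FPiota I Cf) (FP_free I Cf) HCf).
  - assert (HQ : residually C Q).
    { apply (Hres I Cf Q (FPiota I Cf) (FP_free I Cf)).
      intros i g Hg. exists (Cf i), (idhom (Cf i)). repeat split; auto.
      intro y. exists y. reflexivity. }
    set (S := map phi0 K).
    destruct (resid_sep C Q Hfd HQ (list_prod S S)) as [H [pi [HCH Hpi]]].
    exists H, (fun y => pi (phi0 y)). split; auto. split.
    + intros k1 k2 H1 H2. rewrite (proj1 Hphi0 k1 k2 H1 H2). apply hfun_mul.
    + intros k1 k2 H1 H2 Hp. apply (proj2 Hphi0); auto. apply Hpi; auto.
      apply in_prod; apply in_map; auto.
Qed.
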